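(* Let $G$ be a graph with a good partition $(X,\mathcal{B})$ and let $P=(x_1,\dots,x_t)$ be a good permutation of $(X,\mathcal{B})$. Then for every $i\in[t]$ we have $\mathcal{A}^P_i\sqsubseteq\mathcal{B}$, and the graph $G[X\cup\mathsf{notmin}(x_i,\{x_i,\dots,x_t\},\mathcal{A}^P_{i-1})]$ is an $X$-interval graph.
   Context: Partitions are into nonempty blocks; $\mathcal{A}\sqsubseteq\mathcal{B}$ means every block of $\mathcal{A}$ is contained in a block of $\mathcal{B}$. $\mathsf{CC}(H)$ is the partition of $V(H)$ into vertex sets of connected components. For a maximal clique $X$ of a chordal graph $H$, $H$ is an $X$-interval graph if there is an ordering $(K_1,\dots,K_k,X)$ of all maximal cliques of $H$ ending with $X$ such that for each vertex the cliques containing it are consecutive. For $X\subseteq V(G)$, $Y\subseteq X$, a partition $\mathcal{B}$ of $V(G)\setminus X$, a block $B$ and $x\in Y$: $N(x)$ is minimal in $B$ for $Y$ if $N(x)\cap B\subseteq N(y)$ for all $y\in Y$; $x$ is removable from $Y$ for $\mathcal{B}$ if $N(x)$ is minimal for $Y$ in at least $|\mathcal{B}|-1$ blocks. A good partition of $G$ is a pair $(X,\mathcal{B})$, $X$ a maximal clique, $\mathcal{B}$ a partition of $V(G)\setminus X$, with (i) $\mathsf{CC}(G-X)\sqsubseteq\mathcal{B}$; (ii) $G[X\cup B]$ is an $X$-interval graph for all $B\in\mathcal{B}$; (iii) there is an ordering $(x_1,\dots,x_t)$ of $X$, called a good permutation of $(X,\mathcal{B})$, with each $x_i$ removable from $\{x_i,\dots,x_t\}$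 for $\mathcal{B}$. For $W\subseteq X$, $x\in W$ and a partition $\mathcal{A}$ of $V(G)\setminus X$, $\mathsf{notmin}(x,W,\mathcal{A})$ is the union of the blocks $A\in\mathcal{A}$ in which $N(x)$ is not minimal for $W$. For an ordering $P=(x_1,\dots,x_\ell)$ of a subset of $X$: $\mathcal{A}^P_0=\mathsf{CC}(G-X)$, and for $i\in[\ell]$, $\mathcal{A}^P_i$ is obtained from $\mathcal{A}^P_{i-1}$ by replacing the blocks contained in $\mathsf{notmin}(x_i,X\setminus\{x_1,\dots,x_{i-1}\},\mathcal{A}^P_{i-1})$ by their union (nothing changes if there are none). *)

(* Defs.v *)
From mathcomp Require Import all_boot.
Set Implicit Arguments. Unset Strict Implicit. Unset Printing Implicit Defensive.

(* Finite simple graph: vertex type T : finType, adjacency e : rel T,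
   assumed symmetric and irreflexive in the theorem. *)
Section Defs.
Variables (T : finType) (e : rel T).

Definition nbh (x : T) : {set T} := [set y | e x y].

Definition erestr (S : {set T}) : rel T := fun u v => [&& u \in S, v \in S & e u v].

Definition ccomp (S : {set T}) : {set {set T}} :=
  [set [set y | connect (erestr S) x y] | x in S].

Definition refines (A B : {set {set T}}) : Prop :=
  forall a, a \in A -> exists2 b, b \in B & a \subset b.

Definition clique_in (S K : {set T}) : Prop :=
  K \subset S /\ (forall x y, x \in K -> y \in K -> x != y -> e x y).

Definition maxclique (S K : {set T}) : Prop :=
  clique_in S K /\ (forall K', clique_in S K' -> K \subset K' -> K' = K).

Definition chordal (S : {set T}) : Prop :=
  forall s : seq T, uniq s -> {subset s <= S} -> 3 < size s -> cycle e s ->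
    exists x y, [/\ x \in s, y \in s, x != y,
                    (y != next s x) && (x != next s y) & e x y].

Definition Xinterval (S X : {set T}) : Prop :=
  [/\ chordal S, maxclique S X &
      exists s : seq {set T},
        [/\ uniq (rcons s X),
            (forall K, K \in rcons s X <-> maxclique S K) &
            (forall v i j k, i <= j -> j <= k -> k < size (rcons s X) ->
               v \in nth set0 (rcons s X) i -> v \in nth set0 (rcons s X) k ->
               v \in nth set0 (rcons s X) j)]].

Definition nminimal (Y b : {set T}) (x : T) : bool :=
  [forall y in Y, nbh x :&: b \subset nbh y].

Definition removable (Y : {set T}) (B : {set {set T}}) (x : T) : bool :=
  #|B| - 1 <= #|[set b in B | nminimal Y b x]|.

Definition good_perm (X : {set T}) (B : {set {set T}}) (P : seq T) : Prop :=
  [/\ uniq P, [set x in P] = X &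
      forall x0 i, i < size P -> removable [set y in drop i P] B (nth x0 P i)].

Definition good_partition (X : {set T}) (B : {set {set T}}) : Prop :=
  [/\ maxclique setT X,
      partition B (~: X),
      refines (ccomp (~: X)) B,
      (forall b, b \in B -> Xinterval (X :|: b) X) &
      exists P, good_perm X B P].

Definition notmin (x : T) (W : {set T}) (A : {set {set T}}) : {set T} :=
  \bigcup_(a in A | ~~ nminimal W a x) a.

Definition Astep (A : {set {set T}}) (W : {set T}) (x : T) : {set {set T}} :=
  let N := notmin x W A in
  let C := [set a in A | a \subset N] in
  (A :\: C) :|: (if C == set0 then set0 else [set \bigcup_(a in C) a]).

Fixpoint Aiter (A : {set {set T}}) (W : {set T}) (P : seq T) (n : nat)
  : {set {set T}} :=
  match n, P with
  | n'.+1, x :: P' => Aiter (Astep A W x) (W :\ x) P' n'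
  | _, _ => A
  end.

Definition AP (X : {set T}) (P : seq T) (i : nat) : {set {set T}} :=
  Aiter (ccomp (~: X)) X P i.

End Defs.

(* Main.v *)
Require Import Defs.
From mathcomp Require Import all_boot.
From mathcomp Require Import zify.
Set Implicit Arguments. Unset Strict Implicit. Unset Printing Implicit Defensive.

Section Proofs.
Variables (T : finType) (e : rel T).

Lemma filter_idx (A : Type) (p : pred A) (s : seq A) (x0 : A) :
  exists f : nat -> nat, (forall i j, i <= j -> f i <= f j) /\
    forall i, i < size (filter p s) -> f i < size s /\ nth x0 (filter p s) i = nth x0 s (f i).
Proof.
elim: s => [|x s [f [Hm Hf]]].
  by exists id; split=> // i.
case Hp: (p x); rewrite /= Hp.
- exists (fun i => if i is i'.+1 then (f i').+1 else 0); split.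
    by move=> [|i] [|j] //= Hij; rewrite ltnS Hm.
  by move=> [|i] //= Hi; have [H1 H2] := Hf i Hi; rewrite ltnS H1 H2.
- exists (fun i => (f i).+1); split.
    by move=> i j Hij; rewrite ltnS Hm.
  by move=> i Hi; have [H1 H2] := Hf i Hi; rewrite ltnS H1 H2.
Qed.

Definition consec (s : seq {set T}) := forall v i j k, i <= j -> j <= k -> k < size s ->
  v \in nth set0 s i -> v \in nth set0 s k -> v \in nth set0 s j.

Lemma consec_filter p s : consec s -> consec (filter p s).
Proof.
move=> Hs v i j k Hij Hjk Hk.
have [f [Hm Hf]] := filter_idx p s set0.
have Hj : j < size (filter p s) by apply: leq_ltn_trans Hk.
have Hi : i < size (filter p s) by apply: leq_ltn_trans Hij Hj.
have [_ Ei] := Hf i Hi; have [_ Ej] := Hf j Hj; have [Hk' Ek] := Hf k Hk.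
rewrite Ei Ej Ek => Hvi Hvk.
exact: (Hs v (f i) (f j) (f k) (Hm _ _ Hij) (Hm _ _ Hjk) Hk' Hvi Hvk).
Qed.

Lemma mc_sub (R S K : {set T}) : maxclique e R K -> K \subset S -> S \subset R ->
  maxclique e S K.
Proof.
move=> [[KR Ke] Kmax] KS SR; split; first by split.
move=> K' [K'S K'e] KK'; apply: Kmax => //; split=> //; exact: subset_trans K'S SR.
Qed.

Definition eclosed (X S : {set T}) := forall u v, u \in S -> v \notin X -> e u v -> v \in S.

Lemma Xint_restr (X b S' : {set T}) : maxclique e setT X -> Xinterval e (X :|: b) X ->
  S' \subset b -> eclosed X S' -> Xinterval e (X :|: S') X.
Proof.
move=> HX [Hch Hmc [s [Hu Hmem Hc]]] S'b Hcl.
have S2S : X :|: S' \subset X :|: b by apply: setUS.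
have XS2 : X \subset X :|: S' by apply: subsetUl.
split.
- move=> c Hcu Hcs Hsz Hcy; apply: Hch => // y /Hcs; exact: (subsetP S2S).
- exact: mc_sub HX XS2 (subsetT _).
- exists (filter (fun K : {set T} => K \subset X :|: S') s).
  have Er : rcons (filter (fun K : {set T} => K \subset X :|: S') s) X
     = filter (fun K : {set T} => K \subset X :|: S') (rcons s X) by rewrite filter_rcons XS2.
  rewrite Er; split.
  + exact: filter_uniq.
  + move=> K; rewrite mem_filter; split.
    * case/andP=> KS2 /Hmem HK; exact: mc_sub HK KS2 S2S.
    * move=> HK; have [[KS2 Ke] Kmax] := HK.
      rewrite KS2 /=; apply/Hmem; split; first by split=> //; exact: subset_trans KS2 S2S.
      move=> K' [K'S K'e] KK'.
      apply: (Kmax) => //; split=> //.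
      case: (boolP (K \subset X)) => KX.
      - have XK : X = K.
          apply: Kmax KX; split=> //; by have [[_ ?] _] := HX.
        have K'X : K' = X.
          apply: (proj2 HX); first by split; [exact: subsetT| exact: K'e].
          by rewrite XK.
        by rewrite K'X.
      - have [u uK uX] := subsetPn KX.
        have uS' : u \in S' by move/(subsetP KS2): uK; rewrite in_setU (negbTE uX).
        apply/subsetP=> w wK'; rewrite in_setU; case: (boolP (w \in X)) => //= wX.
        case: (eqVneq u w) => [<- //|uw].
        apply: Hcl uS' wX _; apply: K'e => //; exact: (subsetP KK').
  + exact: (consec_filter Hc).
Qed.

Lemma Xint_clique (X : {set T}) : maxclique e setT X -> Xinterval e X X.
Proof.
move=> HX; have [[_ Xe] _] := HX.
split.
- move=> [|x [|y [|z [|w r]]]] //= Hu Hsub _ _.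
  move: Hu; rewrite !inE !negb_or => /andP[/and3P[xy xz /andP[xw _]] /andP[/and3P[yz yw _] /andP[/andP[zw _] _]]].
  exists x, z; split.
  + by rewrite inE eqxx.
  + by rewrite !inE eqxx !orbT.
  + exact: xz.
  + rewrite /= eqxx (eq_sym z x) (negbTE xz) (eq_sym z y) (negbTE yz) eqxx.
    by rewrite /=.
  + apply: Xe => //; apply: Hsub; by rewrite !inE eqxx ?orbT.
- exact: mc_sub HX (subxx _) (subsetT _).
- exists [::]; split => //.
  + move=> K; rewrite /= inE; split; first by move/eqP->; exact: mc_sub HX (subxx _) (subsetT _).
    move=> [[KX Ke] Kmax]; apply/eqP; symmetry; apply: Kmax KX; split => //.
  + by move=> v [|i] [|j] [|k].
Qed.


Lemma nmin_sub (W a b : {set T}) (x : T) : a \subset b -> nminimal e W b x -> nminimal e W a x.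
Proof.
move=> ab /forall_inP H; apply/forall_inP=> y yW; apply: subset_trans (H y yW).
exact: setIS.
Qed.

Lemma nonmin_unique (W : {set T}) (B : {set {set T}}) x b1 b2 :
  removable e W B x -> b1 \in B -> b2 \in B ->
  ~~ nminimal e W b1 x -> ~~ nminimal e W b2 x -> b1 = b2.
Proof.
move=> Hr H1 H2 N1 N2; apply/eqP; apply/negPn/negP => b12.
have S2B : [set b1; b2] \subset B by apply/subsetP=> b; rewrite !inE => /orP[]/eqP->.
have Hsub : [set b in B | nminimal e W b x] \subset B :\: [set b1; b2].
  apply/subsetP=> b; rewrite !inE => /andP[bB bm]; rewrite bB andbT.
  by apply/negP=> /orP[/eqP Eb|/eqP Eb]; subst b; [rewrite bm in N1|rewrite bm in N2].
have := subset_leq_card Hsub.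
rewrite cardsD (setIidPr S2B) cards2 b12.
have := subset_leq_card S2B; rewrite cards2 b12.
move: Hr; rewrite /removable; lia.
Qed.

Lemma notminP x W (A : {set {set T}}) v :
  reflect (exists2 a, (a \in A) && ~~ nminimal e W a x & v \in a) (v \in notmin e x W A).
Proof. exact: bigcupP. Qed.

Lemma key_N (A B : {set {set T}}) W x v :
  refines A B -> removable e W B x -> v \in notmin e x W A ->
  exists2 b0, b0 \in B & notmin e x W A \subset b0.
Proof.
move=> Href Hr /notminP [a /andP[aA an] va].
have [b0 b0B ab0] := Href a aA.
have b0n : ~~ nminimal e W b0 x by apply: contra an; exact: nmin_sub.
exists b0 => //; apply/subsetP=> w /notminP [a' /andP[a'A a'n] wa'].
have [b' b'B ab'] := Href a' a'A.
have b'n : ~~ nminimal e W b' x by apply: contra a'n; exact: nmin_sub.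
rewrite -(nonmin_unique Hr b'B b0B b'n b0n); exact: (subsetP ab').
Qed.

Definition Inv X (B A : {set {set T}}) := refines A B /\ forall a, a \in A -> eclosed X a.

Lemma notmin_closed X B A W x : Inv X B A -> eclosed X (notmin e x W A).
Proof.
move=> [_ Hcl] u v /notminP [a aA ua] vX uv; apply/notminP; exists a => //.
move/andP: aA => [aA _]; exact: Hcl aA u v ua vX uv.
Qed.

Lemma Inv_step X B A W x : removable e W B x -> Inv X B A -> Inv X B (Astep e A W x).
Proof.
move=> Hr [Href Hcl]; rewrite /Astep.
set N := notmin e x W A; set C := [set a in A | a \subset N].
have UN : \bigcup_(a in C) a \subset N.
  by apply/bigcupsP=> a; rewrite inE => /andP[_].
split.
- move=> a'; rewrite in_setU in_setD => /orP[/andP[_ a'A]|]; first exact: Href.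
  case: ifP => [_|/negbT Cn]; first by rewrite inE. rewrite inE => /eqP ->.
  have [a] := set0Pn _ Cn; rewrite inE => /andP[aA _].
  have [b bB ab] := Href a aA.
  case: (eqVneq N set0) => [N0|/set0Pn [v vN]]; last first.
  + have [b0 b0B Nb0] := key_N Href Hr vN.
    by exists b0 => //; apply: subset_trans UN Nb0.
  + by exists b => //; apply: subset_trans UN _; rewrite N0 sub0set.
- move=> a'; rewrite in_setU in_setD => /orP[/andP[_ a'A]|]; first exact: Hcl.
  case: ifP => _; first by rewrite inE. rewrite inE => /eqP -> u v /bigcupP [a aC ua] vX uv.
  apply/bigcupP; exists a => //; move: aC; rewrite inE => /andP[aA _].
  exact: Hcl aA u v ua vX uv.
Qed.

Lemma Aiter_S (A : {set {set T}}) W P n x0 : n < size P ->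
  Aiter e A W P n.+1 = Astep e (Aiter e A W P n) (W :\: [set y in take n P]) (nth x0 P n).
Proof.
have A0 : forall A W P, Aiter e A W P 0 = A by move=> ? ? [].
elim: P A W n => [|x P IH] A W [|n] //=.
- move=> _; rewrite A0.
  have -> : W :\: [set y in [::]] = W by apply/setP=> y; rewrite !inE in_nil.
  by [].
- move=> Hn; rewrite (IH _ _ _ Hn).
  have -> : W :\: [set y in x :: take n P] = (W :\ x) :\: [set y in take n P].
    apply/setP=> y; rewrite !inE negb_or; by case: (y == x); case: (y \in W); case: (y \in take n P).
  by [].
Qed.

Lemma Wk (X : {set T}) P k : uniq P -> [set x in P] = X ->
  X :\: [set y in take k P] = [set y in drop k P].
Proof.
move=> Hu HX; apply/setP=> y; rewrite -HX !inE.
have : uniq (take k P ++ drop k P) by rewrite cat_take_drop.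
rewrite cat_uniq => /and3P [_ Hdis _].
have E : (y \in P) = (y \in take k P) || (y \in drop k P) by rewrite -mem_cat cat_take_drop.
rewrite E; case Hd: (y \in drop k P); last by rewrite orbF andNb.
rewrite orbT andbT; exact: (hasPn Hdis).
Qed.

End Proofs.

Theorem lemma4 (T : finType) (e : rel T) (He_sym : symmetric e)
  (He_irr : irreflexive e) (X : {set T}) (B : {set {set T}}) (P : seq T) :
  good_partition e X B -> good_perm e X B P ->
  forall (x0 : T) (k : nat), k < size P ->
    refines (AP e X P k.+1) B /\
    Xinterval e (X :|: notmin e (nth x0 P k) [set y in drop k P] (AP e X P k)) X.
Proof.
move=> [HX Hpart Hcc Hint _] [Hu HPX Hrem] x0 k Hk.
have Estep : forall n, n < size P -> AP e X P n.+1 =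
    Astep e (AP e X P n) [set y in drop n P] (nth x0 P n).
  by move=> n Hn; rewrite /AP (Aiter_S _ _ _ x0) // Wk.
have Hinv : forall n, n <= size P -> Inv e X B (AP e X P n).
  elim=> [|n IH] Hn.
  - have -> : AP e X P 0 = ccomp e (~: X) by rewrite /AP; case: (P).
    split; first exact: Hcc.
    move=> a /imsetP [z zX ->] u v; rewrite !inE => Hzu vX Huv.
    have uX : u \in ~: X.
      rewrite -(closed_connect _ Hzu) //.
      by move=> p q /and3P[-> -> _].
    apply: connect_trans Hzu (connect1 _); by rewrite /erestr uX inE vX Huv.
  - rewrite Estep //; apply: Inv_step; first exact: Hrem.
    by apply: IH; apply: ltnW.
split; first by have [] := Hinv k.+1 Hk.
have Hk' := Hinv k (ltnW Hk).
have Ncl := notmin_closed (x:=nth x0 P k) (W:=[set y in drop k P]) Hk'.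
case: (eqVneq (notmin e (nth x0 P k) [set y in drop k P] (AP e X P k)) set0) =>
  [->|/set0Pn [v vN]].
- by rewrite setU0; apply: Xint_clique.
- have [b0 b0B Nb0] := key_N (proj1 Hk') (Hrem x0 k Hk) vN.
  exact: Xint_restr HX (Hint b0 b0B) Nb0 Ncl.
Qed.
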